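(* Let $p,q\in\mathbf{R}_+^n$, $K_0\in\mathbf{R}_+$, $w\in\mathbf{R}_{++}^n$ and $K=(K_1,\dots,K_n)$ with $K_i\in\mathbf{R}_+$, such that $0\le p_i<q_i\le p_i+K_i$ for $i=1,\dots,n$. Consider the problem \[ \begin{array}{ll} \mbox{maximize} & \mathbf{E}_{\pi}(w^{T}x-K_0)_+ \\ \mbox{subject to} & \mathbf{E}_{\pi}(x_i)=q_i,\\ & \mathbf{E}_{\pi}(x_i-K_i)_+=p_i,\quad i=1,\dots,n, \end{array} \] over all probability measures $\pi$ supported on $\mathbf{R}_+^n$ (the asset price vector $x$ having law $\pi$). Then the optimal value of this problem is bounded above by \[ d^{\sup}=\max_{0\le j\le n+1}\; w^{T}p+\sum_{i=1}^n w_i\min(q_i-p_i,\beta_jK_i)-\beta_jK_0, \] where $\beta_j:=(q_j-p_j)/K_j\in[0,1]$ for $j=1,\dots,n$, $\beta_0=0$ and $\beta_{n+1}=1$.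
   Context: $(y)_+=\max(y,0)$. $\mathbf{R}_{++}^n$ denotes vectors with strictly positive components. *)

(* Defs.v *)
From HB Require Import structures.
From mathcomp Require Import all_boot all_order all_algebra.
From mathcomp Require Import all_classical all_reals all_analysis.
Set Implicit Arguments. Unset Strict Implicit. Unset Printing Implicit Defensive.
Import Order.TTheory GRing.Theory Num.Theory.
Local Open Scope ring_scope.

Definition pospart (R : realType) (y : R) : R := Num.max y 0.

(* beta_j for j = 0..n+1 :  beta_0 = 0, beta_{n+1} = 1,
   beta_j = (q_j - p_j)/K_j for 1 <= j <= n (vectors indexed from 0). *)
Definition beta (R : realType) (n : nat) (p q K : 'I_n -> R) (j : 'I_n.+2) : R :=
  if (j : nat) == 0%N then 0
  else match (insub (j.-1) : option 'I_n) with
       | Some i => (q i - p i) / K i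
       | None => 1
       end.

Definition dterm (R : realType) (n : nat) (p q K w : 'I_n -> R) (K0 : R)
  (j : 'I_n.+2) : R :=
  \sum_(i < n) w i * p i
  + \sum_(i < n) w i * Num.min (q i - p i) (beta p q K j * K i)
  - beta p q K j * K0.

Definition dsup (R : realType) (n : nat) (p q K w : 'I_n -> R) (K0 : R) : R :=
  \big[Num.max/dterm p q K w K0 ord0]_(j < n.+2) dterm p q K w K0 j.

(* Main.v *)
Require Import Defs.
From HB Require Import structures.
From mathcomp Require Import all_boot all_order all_algebra.
From mathcomp Require Import all_classical all_reals all_analysis.
From mathcomp Require Import measurable_realfun.
From mathcomp Require Import lra ring.
Import Order.TTheory GRing.Theory Num.Theory.
Set Implicit Arguments. Unset Strict Implicit.
Local Open Scope ring_scope.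

Definition gf (R : realType) (n : nat) (p q K w : 'I_n -> R) (K0 : R) (y : R) : R :=
  \sum_(i < n) w i * p i
  + \sum_(i < n) w i * Num.min (q i - p i) (y * K i)
  - y * K0.
Lemma glin (R : realType) n (p q K w : 'I_n -> R) K0 (y bt : R) :
 (forall i, bt * K i < q i - p i -> y * K i <= q i - p i) ->
 (forall i, q i - p i <= bt * K i -> q i - p i <= y * K i) ->
 gf p q K w K0 y - gf p q K w K0 bt =
   (y - bt) * (\sum_(i < n) (if bt * K i < q i - p i then w i * K i else 0) - K0).
Proof.
move=> h1 h2; rewrite /gf.
have -> : \sum_(i < n) w i * Num.min (q i - p i) (y * K i) =
  \sum_(i < n) w i * Num.min (q i - p i) (bt * K i) +
  (y - bt) * \sum_(i < n) (if bt * K i < q i - p i then w i * K i else 0).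
  rewrite mulr_sumr -big_split /=; apply: eq_bigr => i _.
  case: ifP => h.
    rewrite (min_r (h1 i h)) (min_r (ltW h)); ring.
  have h' : q i - p i <= bt * K i by rewrite leNgt h.
  by rewrite (min_l h') (min_l (h2 i h')) mulr0 addr0.
ring.
Qed.

Lemma beta_lift (R : realType) n (p q K : 'I_n -> R) (i : 'I_n) :
  beta p q K ((inord i.+1 : 'I_n.+2)) = (q i - p i) / K i.
Proof. by rewrite /beta inordK ?ltnS 1?ltnW //= valK. Qed.

Lemma beta0 (R : realType) n (p q K : 'I_n -> R) : beta p q K ord0 = 0.
Proof. by []. Qed.

Lemma betamax (R : realType) n (p q K : 'I_n -> R) : beta p q K ord_max = 1.
Proof. by rewrite /beta /= insubF // ltnn. Qed.

Lemma dterm_le (R : realType) n (p q K w : 'I_n -> R) K0 j :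
  dterm p q K w K0 j <= dsup p q K w K0.
Proof. exact: (le_bigmax_cond _ (P := xpredT)). Qed.

Lemma g_le_dsup (R : realType) n (p q K w : 'I_n -> R) K0
  (hK : forall i, 0 < K i) (bt : R) (hb0 : 0 <= bt) (hb1 : bt <= 1) :
  gf p q K w K0 bt <= dsup p q K w K0.
Proof.
set s := (\sum_(i < n) (if bt * K i < q i - p i then w i * K i else 0) - K0).
have [s0|s0] := leP 0 s.
  have P0 : (fun j => bt <= beta p q K j) ord_max by rewrite /= betamax.
  case: (@arg_minP _ _ _ ord_max (fun j => bt <= beta p q K j) (beta p q K) P0) => jm /= Hjm Hmin.
  set y := beta p q K jm in Hjm Hmin.
  have := @glin R n p q K w K0 y bt.
  have -> : gf p q K w K0 y = dterm p q K w K0 jm by [].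
  move=> H; apply: (le_trans _ (dterm_le _ _ _ _ _ jm)).
  rewrite -subr_ge0 H.
  - by apply: mulr_ge0 => //; rewrite subr_ge0.
  - move=> i hi; have := Hmin ((inord i.+1 : 'I_n.+2)); rewrite beta_lift.
    rewrite ler_pdivlMr // ler_pdivlMr //; exact: (fun f => f (ltW hi)).
  - move=> i hi; apply: le_trans hi _; apply: ler_wpM2r => //; exact: ltW.
have P0 : (fun j => beta p q K j <= bt) ord0 by rewrite /= beta0.
case: (@arg_maxP _ _ _ ord0 (fun j => beta p q K j <= bt) (beta p q K) P0) => jm /= Hjm Hmax.
set y := beta p q K jm in Hjm Hmax.
have := @glin R n p q K w K0 y bt.
have -> : gf p q K w K0 y = dterm p q K w K0 jm by [].
move=> H; apply: (le_trans _ (dterm_le _ _ _ _ _ jm)).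
rewrite -subr_ge0 H.
- by apply: mulr_le0; [rewrite subr_le0 | exact: ltW].
- move=> i hi; apply: le_trans (ltW hi); apply: ler_wpM2r => //; exact: ltW.
move=> i hi; have := Hmax ((inord i.+1 : 'I_n.+2)); rewrite beta_lift.
rewrite ler_pdivrMr // ler_pdivrMr //; exact: (fun f => f hi).
Qed.

Unset Implicit Arguments.
Theorem proposition4 (R : realType) (n : nat)
  (p q K w : 'I_n -> R) (K0 : R)
  (hp : forall i, 0 <= p i) (hq : forall i, 0 <= q i)
  (hK0 : 0 <= K0) (hK : forall i, 0 <= K i) (hw : forall i, 0 < w i)
  (hpq : forall i, p i < q i) (hqK : forall i, q i <= p i + K i)
  (d : measure_display) (T : measurableType d) (P : probability T R)
  (x : 'I_n -> T -> R)
  (xmeas : forall i, measurable_fun setT (x i))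
  (xpos : forall i t, 0 <= x i t)
  (hEq : forall i, (\int[P]_t (x i t)%:E = (q i)%:E)%E)
  (hEc : forall i, (\int[P]_t (pospart (x i t - K i))%:E = (p i)%:E)%E) :
  (\int[P]_t (pospart (\sum_(i < n) w i * x i t - K0))%:E
     <= (dsup p q K w K0)%:E)%E.
Proof.
have Kpos : forall i, 0 < K i.
  by move=> i; have := hpq i; have := hqK i; lra.
set Y := fun t => \sum_(i < n) w i * x i t - K0.
have mY : measurable_fun setT Y.
  apply: (@measurable_funB _ _ _ _ (fun t => \sum_(i < n) w i * x i t) (cst K0)).
    apply: measurable_sum => i; apply: measurable_funM => //; exact: measurable_cst.
  exact: measurable_cst.
set A := [set t : T | 0 < Y t]%classic.
have mA : measurable A.
  rewrite (_ : A = (setT `&` Y @^-1` `]0, +oo[)%classic).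
    exact: mY.
  rewrite setTI; apply/seteqP; split => t /=; rewrite in_itv /= andbT //.
set lam := fun t => \1_A t : R.
have mlam : measurable_fun setT lam by exact: measurable_indic.
set mn := fun i t => Num.min (x i t) (K i).
have mmn i : measurable_fun setT (mn i).
  by apply: measurable_minr => //; exact: measurable_cst.
set pp := fun i t => pospart (x i t - K i).
have mpp i : measurable_fun setT (pp i).
  apply: measurable_maxr; last exact: measurable_cst.
  by apply: measurable_funB => //; exact: measurable_cst.
have mpY : measurable_fun setT (fun t => pospart (Y t)).
  by apply: measurable_maxr => //; exact: measurable_cst.
have lam01 t : (lam t = 1 /\ 0 < Y t) \/ (lam t = 0 /\ Y t <= 0).
  rewrite /lam indicE; case: (boolP (t \in A)) => h.
    by left; split => //; exact: (set_mem h).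
  right; split => //; rewrite leNgt; apply/negP => h'.
  by move: h; rewrite (mem_set (h' : A t)).

have lam_ge0 t : 0 <= lam t by case: (lam01 t) => [[-> _]|[-> _]].
have lam_le1 t : lam t <= 1 by case: (lam01 t) => [[-> _]|[-> _]].
have mn_ge0 i t : 0 <= mn i t by rewrite /mn le_min xpos hK.
have pp_ge0 i t : 0 <= pp i t by rewrite /pp /pospart le_max lexx orbT.
have ppmn i t : pp i t + mn i t = x i t.
  rewrite /pp /mn /pospart; case: (leP (x i t) (K i)) => h.
    by rewrite max_r ?subr_le0 // add0r.
  by rewrite max_l ?subrK // subr_ge0 ltW.
have pw t : pospart (Y t) + lam t * K0 <=
    \sum_(i < n) (w i * pp i t + w i * (lam t * mn i t)).
  case: (lam01 t) => [[-> hY]|[-> hY]].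
    rewrite /pospart max_l ?mul1r; last exact: ltW.
    have -> : \sum_(i < n) (w i * pp i t + w i * (1 * mn i t)) =
              \sum_(i < n) w i * x i t.
      by apply: eq_bigr => i _; rewrite mul1r -mulrDr ppmn.
    by rewrite /Y /= subrK.
  rewrite /pospart max_r // mul0r addr0; apply: sumr_ge0 => i _.
  by rewrite mul0r mulr0 addr0; apply: mulr_ge0 => //; exact: ltW.
set bt := fine (P A).
have PAE : P A = bt%:E.
  rewrite fineK // ge0_fin_numE //; apply: (le_lt_trans (probability_le1 P mA)).
  exact: ltry.
have bt0 : 0 <= bt.
  have : (0 <= P A)%E by exact: measure_ge0.
  by rewrite PAE lee_fin.
have bt1 : bt <= 1 by have := probability_le1 P mA; rewrite PAE lee_fin.
have ilamc c : 0 <= c -> (\int[P]_t (lam t * c)%:E = (bt * c)%:E)%E.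
  move=> c0; under eq_integral do rewrite EFinM.
  rewrite ge0_integralZr //; last by move=> t _; rewrite lee_fin.
    rewrite /lam integral_indic // setIT. by rewrite EFinM; congr (_ * _)%E; exact: PAE.
  exact/measurable_EFinP.
set m := fun i => (\int[P]_t (lam t * mn i t)%:E)%E.
have m_ge0 i : (0 <= m i)%E.
  by apply: integral_ge0 => t _; rewrite lee_fin mulr_ge0.
have m_le1 i : (m i <= (bt * K i)%:E)%E.
  rewrite -ilamc //; apply: ge0_le_integral => //.
  - by move=> t _; rewrite lee_fin mulr_ge0.
  - by apply/measurable_EFinP; apply: measurable_funM.
  - by apply/measurable_EFinP; apply: measurable_funM => //; exact: measurable_cst.
  move=> t _; rewrite lee_fin; apply: ler_wpM2l => //.
  by rewrite /mn ge_min lexx orbT.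
have imn i : (\int[P]_t (mn i t)%:E = (q i - p i)%:E)%E.
  have H : (\int[P]_t (mn i t)%:E + (p i)%:E = (q i)%:E)%E.
    rewrite -hEq -hEc -ge0_integralD //.
    - by apply: eq_integral => t _; rewrite -EFinD addrC ppmn.
    - by move=> t _; rewrite lee_fin; exact: (mn_ge0 i t).
    - by apply/measurable_EFinP; exact: (mmn i).
    - by move=> t _; rewrite lee_fin; exact: (pp_ge0 i t).
    - by apply/measurable_EFinP; exact: (mpp i).
  by rewrite -[LHS](addeK (x := (p i)%:E)) // H EFinB.
have m_le2 i : (m i <= (q i - p i)%:E)%E.
  rewrite -imn; apply: ge0_le_integral => //.
  - by move=> t _; rewrite lee_fin mulr_ge0.
  - by apply/measurable_EFinP; apply: measurable_funM.
  - exact/measurable_EFinP.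
  move=> t _; rewrite lee_fin; rewrite -[leRHS]mul1r; apply: ler_wpM2r => //.
set r := fun i => fine (m i).
have mE i : m i = (r i)%:E.
  rewrite fineK // ge0_fin_numE //; apply: (le_lt_trans (m_le1 i)); exact: ltry.
have hFi i : (\int[P]_t (w i * pp i t + w i * (lam t * mn i t))%:E
    = (w i * p i + w i * r i)%:E)%E.
  rewrite EFinD.
  under eq_integral do rewrite EFinD.
  rewrite ge0_integralD //.
  - congr (_ + _)%E.
      under eq_integral do rewrite EFinM.
      rewrite ge0_integralZl //; last by rewrite lee_fin ltW.
      + by rewrite hEc EFinM.
      + by apply/measurable_EFinP; exact: (mpp i).
      + by move=> t _; rewrite lee_fin; exact: (pp_ge0 i t).
    under eq_integral do rewrite EFinM.
    rewrite ge0_integralZl //; last by rewrite lee_fin ltW.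
    + by rewrite EFinM -mE.
    + by apply/measurable_EFinP; apply: measurable_funM.
    + by move=> t _; rewrite lee_fin mulr_ge0.
  - by move=> t _; rewrite lee_fin mulr_ge0 // ltW.
  - by apply/measurable_EFinP; apply: measurable_funM => //; exact: measurable_cst.
  - by move=> t _; rewrite lee_fin !mulr_ge0 // ltW.
  - apply/measurable_EFinP; apply: measurable_funM; first exact: measurable_cst.
    exact: measurable_funM.

have H1 : (\int[P]_t (pospart (Y t))%:E + (bt * K0)%:E <=
    (\sum_(i < n) (w i * p i + w i * r i))%:E)%E.
  rewrite -ilamc // -ge0_integralD //; first last.
  - by apply/measurable_EFinP; apply: measurable_funM => //; exact: measurable_cst.
  - by move=> t _; rewrite lee_fin mulr_ge0.
  - exact/measurable_EFinP.
  - by move=> t _; rewrite lee_fin /pospart le_max lexx orbT.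
  apply: (@le_trans _ _ (\int[P]_t ((\sum_(i < n)
      (w i * pp i t + w i * (lam t * mn i t)))%:E))%E).
    apply: ge0_le_integral => //.
    - by move=> t _; rewrite -EFinD lee_fin addr_ge0 // ?mulr_ge0 // /pospart le_max lexx orbT.
    - apply: emeasurable_funD; first exact/measurable_EFinP.
      by apply/measurable_EFinP; apply: measurable_funM => //; exact: measurable_cst.
    - apply/measurable_EFinP; apply: measurable_sum => i.
      apply: measurable_funD; first by apply: measurable_funM => //; exact: measurable_cst.
      apply: measurable_funM; first exact: measurable_cst.
      exact: measurable_funM.
    by move=> t _; rewrite -EFinD lee_fin; exact: pw.
  rewrite le_eqVlt; apply/orP; left; apply/eqP.
  under eq_integral do rewrite -sumEFin.
  rewrite ge0_integral_sum //.
  - by rewrite -sumEFin; apply: eq_bigr => i _; exact: hFi.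
  - move=> i; apply/measurable_EFinP.
    apply: measurable_funD; first by apply: measurable_funM => //; exact: measurable_cst.
    apply: measurable_funM; first exact: measurable_cst.
    exact: measurable_funM.
  by move=> i t _; rewrite lee_fin addr_ge0 // !mulr_ge0 // ltW.
have H2 : (\int[P]_t (pospart (Y t))%:E <=
    (\sum_(i < n) (w i * p i + w i * r i) - bt * K0)%:E)%E.
  by rewrite EFinB leeBrDr.
apply: (le_trans H2); rewrite lee_fin.
apply: (le_trans _ (g_le_dsup p q w K0 Kpos bt0 bt1)).
rewrite /gf big_split /= lerD2r lerD2l; apply: ler_sum => i _.
apply: ler_wpM2l; first exact: ltW.
rewrite le_min; apply/andP; split.
  by have := m_le2 i; rewrite mE lee_fin.
by have := m_le1 i; rewrite mE lee_fin.
Qed.
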